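(* Let $\Gamma=(G,\sigma)$ be a signed graph with vertex set $V_G$, and let $\pi=\{C_1,\ldots,C_t,D\}$ be a partition of $V_G$ with $|C_i|=n_i$ ($i=1,\ldots,t$) and $|D|=d$. Assume: (1) for each $1\le i,j\le t$, any two vertices in $C_i$ have the same $j$-th net-degree, i.e. $d^{\pm}_j(u)=d^{\pm}_j(w)$ for all $u,w\in C_i$; (2) for each $i=1,\ldots,t$ and each $v\in D$, exactly one of the following holds: (a) $d^{\pm}_i(v)=0$; (b) $d^+_i(v)=n_i/2$ and $d^-_i(v)=0$; (c) $d^-_i(v)=n_i/2$ and $d^+_i(v)=0$; (d) $d^+_i(v)=n_i$; (e) $d^-_i(v)=n_i$. Define the signed graph $\Gamma^\pi$ on the same vertex set as follows: all edges not joining a vertex of $D$ to a vertex of $\bigcup_i C_i$ are kept with their signs; for every $v\in D$ and every $1\le i\le t$: in case (a), every edge between $v$ and $C_i$ is kept but its sign is reversed; in case (b), the $n_i/2$ (positive) edges from $v$ to $C_i$ are deleted and $v$ is joined by positive edges to the other $n_i/2$ vertices of $C_i$; in case (c), the $n_i/2$ (negative) edges from $v$ to $C_i$ are deleted and $v$ is joined by negative edges to the other $n_i/2$ vertices of $C_i$; in cases (d) and (e), the edges from $v$ to $C_i$ are left unchanged. Then $\Gamma$ and $\Gamma^\pi$ are cospectral, i.e. their adjacency matrices have the same characteristic polynomial.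
   Context: A signed graph $\Gamma=(G,\sigma)$ is a simple finite graph $G=(V_G,E_G)$ with a map $\sigma:E_G\to\{+1,-1\}$. Its adjacency matrix $A_\Gamma=(a_{uv})$ is the symmetric matrix with $a_{uv}=\sigma(uv)$ if $u,v$ are adjacent and $a_{uv}=0$ otherwise; two signed graphs are cospectral if $\det(xI-A)$ coincide. For a vertex $v$ and a vertex subset $C_i$, $d^+_i(v)$ (resp. $d^-_i(v)$) is the number of positive (resp. negative) edges joining $v$ to vertices of $C_i$, and the $i$-th net-degree is $d^{\pm}_i(v)=d^+_i(v)-d^-_i(v)$. *)

(* Defs.v *)
From HB Require Import structures.
From mathcomp Require Import all_boot all_order all_algebra.
Set Implicit Arguments. Unset Strict Implicit. Unset Printing Implicit Defensive.
Import Order.TTheory GRing.Theory Num.Theory.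
Local Open Scope ring_scope.

(* A signed graph on the vertex set 'I_n is represented by its adjacency
   matrix A : 'M[int]_n : A u v = sigma(uv) in {1,-1} if uv is an edge,
   and 0 otherwise; simple graph => symmetric, zero diagonal. *)
Definition signed_adj (n : nat) (A : 'M[int]_n) : Prop :=
  [/\ forall u v, A u v = A v u,
      forall u, A u u = 0 &
      forall u v, A u v = 0 \/ A u v = 1 \/ A u v = -1].

Definition dpos (n : nat) (A : 'M[int]_n) (C : {set 'I_n}) (v : 'I_n) : nat :=
  #|[set u in C | A v u == 1]|.
Definition dneg (n : nat) (A : 'M[int]_n) (C : {set 'I_n}) (v : 'I_n) : nat :=
  #|[set u in C | A v u == -1]|.
Definition netdeg (n : nat) (A : 'M[int]_n) (C : {set 'I_n}) (v : 'I_n) : int :=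
  (dpos A C v)%:Z - (dneg A C v)%:Z.

Definition case_a n (A : 'M[int]_n) C v : bool := netdeg A C v == 0.
Definition case_b n (A : 'M[int]_n) C v : bool :=
  ((2 * dpos A C v)%N == #|C|) && (dneg A C v == 0%N).
Definition case_c n (A : 'M[int]_n) C v : bool :=
  ((2 * dneg A C v)%N == #|C|) && (dpos A C v == 0%N).
Definition case_d n (A : 'M[int]_n) C v : bool := dpos A C v == #|C|.
Definition case_e n (A : 'M[int]_n) C v : bool := dneg A C v == #|C|.

Definition exactly_one_case n (A : 'M[int]_n) C v : Prop :=
  count id [:: case_a A C v; case_b A C v; case_c A C v;
               case_d A C v; case_e A C v] = 1%N.

Definition new_entry n t (A : 'M[int]_n) (C : 'I_t -> {set 'I_n})
    (v u : 'I_n) : int :=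
  match [pick i | u \in C i] with
  | Some i =>
      if case_a A (C i) v then - A v u
      else if case_b A (C i) v then (if A v u == 0 then 1 else 0)
      else if case_c A (C i) v then (if A v u == 0 then -1 else 0)
      else A v u
  | None => A v u
  end.

Definition pi_matrix n t (A : 'M[int]_n) (C : 'I_t -> {set 'I_n})
    (D : {set 'I_n}) : 'M[int]_n :=
  \matrix_(x, y)
    if (x \in D) && (y \notin D) then new_entry A C x y
    else if (y \in D) && (x \notin D) then new_entry A C y x
    else A x y.

(* Main.v *)
Require Import Defs.
From HB Require Import structures.
From mathcomp Require Import all_boot all_order all_algebra.
From mathcomp Require Import ring.
Import Order.TTheory GRing.Theory Num.Theory.
Local Open Scope ring_scope.

Section S.
Variables (n t : nat) (A : 'M[int]_n) (C : 'I_t -> {set 'I_n}) (D : {set 'I_n}).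
Hypothesis HA : signed_adj A.
Hypothesis Hne : forall i, C i != set0.
Hypothesis Hdis : forall i j, i != j -> [disjoint C i & C j].
Hypothesis HdisD : forall i, [disjoint C i & D].
Hypothesis Hcov : forall x, x \in D \/ exists i, x \in C i.

Definition cls x := [pick i | x \in C i].

Lemma clsP x i : (cls x == Some i) = (x \in C i).
Proof.
rewrite /cls; case: pickP => [j Hj|H]; last by rewrite H.
case: (eqVneq j i) Hj => [->|ne] Hj; first by rewrite eqxx Hj.
have -> : (Some j == Some i) = false by apply/negbTE; rewrite /eq_op /= ne.
by rewrite (disjointFr (Hdis _ _ ne) Hj).
Qed.

Lemma clsS x i : x \in C i -> cls x = Some i.
Proof. by rewrite -clsP => /eqP. Qed.
Arguments clsS [x i].

Lemma clsN x : (cls x == None) = (x \in D).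
Proof.
rewrite /cls; case: pickP => [j Hj|H] /=.
  by rewrite (disjointFr (HdisD j) Hj).
by case: (Hcov x) => // -[i]; rewrite H.
Qed.

Lemma card_pos i : (0 < #|C i|)%N.
Proof. by rewrite card_gt0. Qed.

Definition Ar : 'M[rat]_n := map_mx intr A.
Definition k i : rat := 2 / (#|C i|%:R).
Definition e x : rat := if cls x is Some _ then -1 else 1.
Definition Q : 'M[rat]_n := \matrix_(x, y)
  ((x == y)%:R * e x + (if cls x is Some i then (y \in C i)%:R * k i else 0)).

Lemma Qsym x y : Q x y = Q y x.
Proof.
rewrite !mxE; case: (eqVneq x y) => [->//|ne].
rewrite !mul0r !add0r.
case Ex: (cls x) => [i|]; case Ey: (cls y) => [j|].
- rewrite -!clsP Ex Ey; case: (eqVneq i j) => [->//|nij].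
  have -> : (Some j == Some i) = false by apply/negbTE; rewrite /eq_op /= eq_sym nij.
  have -> : (Some i == Some j) = false by apply/negbTE; rewrite /eq_op /= nij.
  by rewrite !mul0r.
- have -> : (y \in C i) = false by rewrite -clsP Ey.
  by rewrite mul0r.
- have -> : (x \in C j) = false by rewrite -clsP Ex.
  by rewrite mul0r.
- done.
Qed.

Lemma mulQl (M : 'M[rat]_n) x y : (Q *m M) x y =
  e x * M x y + (if cls x is Some i then k i * \sum_(u in C i) M u y else 0).
Proof.
rewrite mxE; under eq_bigr => u _ do rewrite mxE mulrDl.
rewrite big_split /=; congr (_ + _).
  rewrite (bigD1 x) //= eqxx mul1r big1 ?addr0 // => u /negbTE.
  by rewrite eq_sym => ->; rewrite !mul0r.
case: (cls x) => [i|]; last by rewrite big1 // => u; rewrite mul0r.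
rewrite mulr_sumr [in RHS]big_mkcond /=; apply: eq_bigr => u _.
by case: (u \in C i); rewrite ?mul1r ?mul0r ?mulr0.
Qed.

Lemma mulQr (M : 'M[rat]_n) x y : (M *m Q) x y =
  M x y * e y + (if cls y is Some j then k j * \sum_(u in C j) M x u else 0).
Proof.
rewrite mxE; under eq_bigr => u _ do rewrite Qsym mxE mulrDr.
rewrite big_split /=; congr (_ + _).
  rewrite (bigD1 y) //= eqxx mul1r big1 ?addr0 // => u /negbTE.
  by rewrite eq_sym => ->; rewrite !mul0r mulr0.
case: (cls y) => [j|]; last by rewrite big1 // => u; rewrite mulr0.
rewrite mulr_sumr [in RHS]big_mkcond /=; apply: eq_bigr => u _.
by case: (u \in C j); rewrite ?mul1r ?mul0r ?mulr0 // mulrC.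
Qed.

Lemma QQ : Q *m Q = 1%:M.
Proof.
apply/matrixP => x y; rewrite mulQl [in RHS]mxE.
rewrite /e; case Ex: (cls x) => [i|]; first last.
  by rewrite mxE Ex /e Ex mul1r mulr1 !addr0.
have Hs : \sum_(u in C i) Q u y = (y \in C i)%:R.
  transitivity (\sum_(u in C i) (- (u == y)%:R + (y \in C i)%:R * k i)).
    apply: eq_bigr => u Hu; rewrite mxE (clsS Hu) /e (clsS Hu) mulrN1.
    by [].
  rewrite big_split /= sumr_const sumrN.
  rewrite big_mkcond /= (bigD1 y) //= big1 ?addr0; last first.
    by move=> u /negbTE ne; rewrite ne; case: (_ \in _).
  rewrite eqxx /k; case: (y \in C i); rewrite /= ?mul0r ?mul0rn ?oppr0 ?add0r //.
  rewrite mul1r -[_ *+ #|C i|]mulr_natr -mulrA mulVf ?mulr1.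
    by rewrite -[2]/(1+1) addrA addNr add0r.
  by rewrite pnatr_eq0 -lt0n card_pos.
rewrite Hs mxE Ex /e Ex.
case: (y \in C i); rewrite /= ?mul0r ?mulr0 ?addr0 ?mulN1r ?opprK //.
 all: ring.
Qed.


Lemma Asym u v : A u v = A v u.
Proof. by case: HA. Qed.
Lemma Aval u v : A u v = 0 \/ A u v = 1 \/ A u v = -1.
Proof. by case: HA. Qed.
Lemma Arsym u v : Ar u v = Ar v u.
Proof. by rewrite !mxE Asym. Qed.

Lemma sum_ind (Cs : {set 'I_n}) (P : pred 'I_n) :
  \sum_(w in Cs) ((P w)%:R : int) = (#|[set w in Cs | P w]|)%:R.
Proof.
rewrite -natr_sum; congr (_%:R).
rewrite (eq_bigr (fun w => if P w then 1 else 0)%N); last by move=> w _; case: (P w).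
rewrite -big_mkcondr sum1_card; apply: eq_card => w; by rewrite inE.
Qed.

Lemma netdeg_sum (Cs : {set 'I_n}) v :
  netdeg A Cs v = \sum_(w in Cs) A v w.
Proof.
rewrite /netdeg /dpos /dneg -!natz -!sum_ind -sumrB; apply: eq_bigr => w _.
by case: (Aval v w) => [->|[->|->]].
Qed.

Definition s x j := \sum_(w in C j) Ar x w.

Lemma s_net x j : s x j = (netdeg A (C j) x)%:~R.
Proof. by rewrite netdeg_sum rmorph_sum; apply: eq_bigr => w _; rewrite mxE. Qed.

Hypothesis H1 : forall i j u w, u \in C i -> w \in C i ->
  netdeg A (C j) u = netdeg A (C j) w.
Hypothesis H2 : forall i v, v \in D -> exactly_one_case A (C i) v.

Lemma s_const i j u w : u \in C i -> w \in C i -> s u j = s w j.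
Proof. by move=> Hu Hw; rewrite !s_net (H1 _ _ _ _ Hu Hw). Qed.
Arguments s_const [i] j [u w].

Lemma cross i j x y : x \in C i -> y \in C j ->
  #|C j|%:R * s y i = #|C i|%:R * s x j.
Proof.
move=> Hx Hy.
have E1 : \sum_(u in C j) s u i = #|C j|%:R * s y i.
  rewrite (eq_bigr (fun _ => s y i)) ?sumr_const ?mulr_natl // => u Hu.
  exact: (s_const i Hu Hy).
have E2 : \sum_(w in C i) s w j = #|C i|%:R * s x j.
  rewrite (eq_bigr (fun _ => s x j)) ?sumr_const ?mulr_natl // => u Hu.
  exact: (s_const j Hu Hx).
rewrite -E1 -E2 /s exchange_big /=; apply: eq_bigr => w _.
by apply: eq_bigr => u _; exact: Arsym.
Qed.
Arguments cross [i j x y].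

Lemma cardR0 i : (#|C i|%:R : rat) != 0.
Proof. by rewrite pnatr_eq0 -lt0n card_pos. Qed.
Arguments cardR0 : clear implicits.

Lemma Es i u : \sum_(w in C i) Ar w u = s u i.
Proof. by apply: eq_bigr => w _; exact: Arsym. Qed.

Lemma QAQ_CC i j x y : x \in C i -> y \in C j -> (Q *m Ar *m Q) x y = Ar x y.
Proof.
move=> Hx Hy.
rewrite mulQr (clsS Hy); under eq_bigr => u _ do rewrite mulQl (clsS Hx).
rewrite mulQl /e (clsS Hx) (clsS Hy).
under eq_bigr => u _ do rewrite Es.
rewrite Es big_split /= -!mulr_sumr -/(s x j).
have -> : \sum_(u in C j) s u i = #|C j|%:R * s y i.
  rewrite (eq_bigr (fun _ => s y i)) ?sumr_const ?mulr_natl // => u Hu.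
  exact: (s_const i Hu Hy).
have hc := cross Hx Hy.
have ha : s y i = #|C i|%:R * s x j / #|C j|%:R.
  by rewrite -hc [_ * s y i]mulrC mulfK ?cardR0.
rewrite ha /k; field.
by rewrite !cardR0.
Qed.

Lemma clsD x : x \in D -> cls x = None.
Proof. by move=> Hx; apply/eqP; rewrite clsN. Qed.
Arguments clsD [x].

Lemma QAQ_DC j x y : x \in D -> y \in C j ->
  (Q *m Ar *m Q) x y = - Ar x y + k j * s x j.
Proof.
move=> Hx Hy.
rewrite mulQr (clsS Hy); under eq_bigr => u _ do rewrite mulQl (clsD Hx).
rewrite mulQl /e (clsD Hx) (clsS Hy).
under eq_bigr => u _ do rewrite mul1r addr0.
rewrite -/(s x j); ring.
Qed.

Lemma QAQ_DD x y : x \in D -> y \in D -> (Q *m Ar *m Q) x y = Ar x y.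
Proof.
move=> Hx Hy.
rewrite mulQr (clsD Hy) mulQl /e (clsD Hx) (clsD Hy); ring.
Qed.

Lemma NE j x y : x \in D -> y \in C j ->
  - Ar x y + k j * s x j = (new_entry A C x y)%:~R.
Proof.
move=> Hx Hy.
have Hp : [pick i | y \in C i] = Some j := clsS Hy.
have n0 := cardR0 j.
rewrite /new_entry Hp s_net mxE.
have := H2 j x Hx; rewrite /exactly_one_case.
case Ha: (case_a A (C j) x); case Hb: (case_b A (C j) x);
  case Hc: (case_c A (C j) x); case Hd: (case_d A (C j) x);
  case He: (case_e A (C j) x) => //= _.
-
  by move: Ha; rewrite /case_a => /eqP ->; rewrite mulr0 addr0 rmorphN.
-
  move: Hb; rewrite /case_b => /andP[/eqP h2 /eqP hn].
  have Hy1 : A x y != -1.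
    apply/negP => /eqP Hm; move: hn; rewrite /dneg => /eqP; rewrite cards_eq0 => /eqP S0.
    have : y \in [set u in C j | A x u == -1] by rewrite inE Hy Hm eqxx.
    by rewrite S0 inE.
  have d0 : (dpos A (C j) x)%:R != 0 :> rat.
    rewrite pnatr_eq0; apply/eqP => h; move: (card_pos j); by rewrite -h2 h.
  rewrite /netdeg hn subr0.
  have -> : ((dpos A (C j) x)%:Z%:~R : rat) = (dpos A (C j) x)%:R by [].
  rewrite /k -h2 natrM.
  case: (Aval x y) => [->|[->|Hm]]; last by rewrite Hm eqxx in Hy1.
  + rewrite eqxx /= rmorph0 rmorph1; field; by rewrite d0.
  + rewrite /= rmorph0 rmorph1; field; by rewrite d0.
-
  move: Hc; rewrite /case_c => /andP[/eqP h2 /eqP hn].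
  have Hy1 : A x y != 1.
    apply/negP => /eqP Hm; move: hn; rewrite /dpos => /eqP; rewrite cards_eq0 => /eqP S0.
    have : y \in [set u in C j | A x u == 1] by rewrite inE Hy Hm eqxx.
    by rewrite S0 inE.
  have d0 : (dneg A (C j) x)%:R != 0 :> rat.
    rewrite pnatr_eq0; apply/eqP => h; move: (card_pos j); by rewrite -h2 h.
  rewrite /netdeg hn sub0r.
  have -> : ((- (dneg A (C j) x)%:Z)%:~R : rat) = - (dneg A (C j) x)%:R by rewrite rmorphN.
  rewrite /k -h2 natrM.
  case: (Aval x y) => [->|[Hm|->]]; first last.
  + rewrite /= rmorph0 rmorphN1; field; by rewrite d0.
  + by rewrite Hm eqxx in Hy1.
  + rewrite eqxx /= rmorph0 rmorphN1; field; by rewrite d0.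
-
  move: Hd; rewrite /case_d /dpos => /eqP Hcard.
  have sub : [set u in C j | A x u == 1] \subset C j.
    by apply/subsetP => u; rewrite inE => /andP[].
  have all1 : forall w, w \in C j -> A x w = 1.
    move=> w Hw; have := subset_cardP Hcard sub w; rewrite inE Hw /=.
    by move=> /eqP.
  rewrite netdeg_sum (eq_bigr (fun _ => 1)) ?sumr_const; last by move=> w Hw; rewrite all1.
  rewrite rmorphMn rmorph1 all1 // rmorph1 /k; field; by rewrite n0.
-
  move: He; rewrite /case_e /dneg => /eqP Hcard.
  have sub : [set u in C j | A x u == -1] \subset C j.
    by apply/subsetP => u; rewrite inE => /andP[].
  have all1 : forall w, w \in C j -> A x w = -1.
    move=> w Hw; have := subset_cardP Hcard sub w; rewrite inE Hw /=.
    by move=> /eqP.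
  rewrite netdeg_sum (eq_bigr (fun _ => -1)) ?sumr_const; last by move=> w Hw; rewrite all1.
  rewrite rmorphMn rmorphN1 all1 // rmorphN1 /k; field; by rewrite n0.
Qed.

Arguments QAQ_DC [j x y].
Arguments NE [j x y].
Arguments QAQ_CC [i j x y].

Lemma QAQ_sym x y : (Q *m Ar *m Q) x y = (Q *m Ar *m Q) y x.
Proof.
have Qt : Q^T = Q by apply/matrixP => u v; rewrite mxE Qsym.
have Art : Ar^T = Ar by apply/matrixP => u v; rewrite mxE Arsym.
have T : (Q *m Ar *m Q)^T = Q *m Ar *m Q by rewrite !trmx_mul Qt Art mulmxA.
by rewrite -{1}T mxE.
Qed.

Lemma main_eq : Q *m Ar *m Q = map_mx intr (pi_matrix A C D).
Proof.
apply/matrixP => x y.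
have -> : map_mx intr (pi_matrix A C D) x y = (pi_matrix A C D x y)%:~R :> rat by rewrite mxE.
have -> : pi_matrix A C D x y =
    if (x \in D) && (y \notin D) then new_entry A C x y
    else if (y \in D) && (x \notin D) then new_entry A C y x
    else A x y by rewrite mxE.
case Dx: (x \in D); case Dy: (y \in D) => /=.
- by rewrite QAQ_DD // mxE.
- have [|[j Hj]] := Hcov y; first by rewrite Dy.
  by rewrite (QAQ_DC Dx Hj) (NE Dx Hj).
- have [|[j Hj]] := Hcov x; first by rewrite Dx.
  by rewrite QAQ_sym (QAQ_DC Dy Hj) (NE Dy Hj).
- have [|[i Hi]] := Hcov x; first by rewrite Dx.
  have [|[j Hj]] := Hcov y; first by rewrite Dy.
  by rewrite (QAQ_CC Hi Hj) mxE.
Qed.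

End S.

Lemma char_poly_conj (R : comNzRingType) n (Q M N : 'M[R]_n) :
  Q *m Q = 1%:M -> Q *m M *m Q = N -> char_poly M = char_poly N.
Proof.
move=> QQ <-.
set Qp := map_mx (@polyC R) Q.
have QpQp : Qp *m Qp = 1%:M by rewrite -map_mxM QQ map_scalar_mx.
have E : char_poly_mx (Q *m M *m Q) = Qp *m char_poly_mx M *m Qp.
  rewrite /char_poly_mx !map_mxM mulmxBr mulmxBl -/Qp.
  by rewrite mul_mx_scalar -scalemxAl QpQp scalemx1.
rewrite /char_poly E !det_mulmx mulrC mulrA -det_mulmx QpQp det1 mul1r.
done.
Qed.

Theorem theorem3p2 (n t : nat) (A : 'M[int]_n)
    (C : 'I_t -> {set 'I_n}) (D : {set 'I_n}) :
  signed_adj A ->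
  (* pi = {C_1,...,C_t,D} is a partition of V *)
  (forall i, C i != set0) ->
  (forall i j, i != j -> [disjoint C i & C j]) ->
  (forall i, [disjoint C i & D]) ->
  (forall x, x \in D \/ exists i, x \in C i) ->
  (* condition (1) *)
  (forall i j u w, u \in C i -> w \in C i -> netdeg A (C j) u = netdeg A (C j) w) ->
  (* condition (2) *)
  (forall i v, v \in D -> exactly_one_case A (C i) v) ->
  char_poly A = char_poly (pi_matrix A C D).
Proof.
move=> HA Hne Hdis HdisD Hcov H1 H2.
apply: (@map_inj_poly _ _ (intr : int -> rat)); first exact: intr_inj.
  by rewrite rmorph0.
rewrite !map_char_poly.
eapply char_poly_conj; first exact: (@QQ n t C Hne Hdis).
by apply: main_eq.
Qed.
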